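(* Let $B\in M_2(\mathbb C)$ have rank one. Then the following are equivalent: (i) $E_{11}\perp B$ and every matrix in $E_{11}^\perp\cap B^\perp$ has rank at most one; (ii) $B\in(\mathbb C E_{12}\cup\mathbb C E_{21})\setminus\{0\}$.
   Context: $M_2(\mathbb C)$ carries the operator (spectral) norm; $E_{ij}$ are matrix units. $X\perp Y$ (Birkhoff–James orthogonality) means $\|X+\lambda Y\|\ge\|X\|$ for all $\lambda\in\mathbb C$, and $X^\perp:=\{Y: X\perp Y\}$. *)

(* Defs.v *)
From HB Require Import structures.
From mathcomp Require Import all_boot all_order all_algebra.
From mathcomp Require Import complex.
From mathcomp Require Import all_classical reals.
Set Implicit Arguments. Unset Strict Implicit. Unset Printing Implicit Defensive.
Import Order.TTheory GRing.Theory Num.Theory ComplexField.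
Local Open Scope ring_scope.
Local Open Scope classical_set_scope.

Definition vnorm (R : realType) (v : 'cV[R[i]]_2) : R :=
  Num.sqrt (\sum_(k < 2) ((complex.Re (v k 0)) ^+ 2 + (complex.Im (v k 0)) ^+ 2)).

Definition opnorm (R : realType) (X : 'M[R[i]]_2) : R :=
  sup [set vnorm (X *m v) | v in [set v : 'cV[R[i]]_2 | vnorm v <= 1]].

(* Birkhoff-James orthogonality: X _|_ Y iff ||X + lam Y|| >= ||X|| for all lam in C. *)
Definition bj_orth (R : realType) (X Y : 'M[R[i]]_2) : Prop :=
  forall lam : R[i], opnorm X <= opnorm (X + lam *: Y).

Definition E (R : realType) (i j : 'I_2) : 'M[R[i]]_2 := delta_mx i j.

(* Main.v *)
Require Import Defs.
From HB Require Import structures.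
From mathcomp Require Import all_boot all_order all_algebra.
From mathcomp Require Import complex.
From mathcomp Require Import all_classical reals.
From mathcomp Require Import ring lra.
Import Order.TTheory GRing.Theory Num.Theory ComplexField.
Local Open Scope ring_scope.
Section S.
Variable R : realType.
Local Open Scope classical_set_scope.
Definition sqn (z : R[i]) : R := complex.Re z ^+ 2 + complex.Im z ^+ 2.
Definition vn2 (v : 'cV[R[i]]_2) : R := \sum_(k < 2) sqn (v k 0).
Definition frob2 (M : 'M[R[i]]_2) : R :=
  sqn (M 0 0) + sqn (M 0 1) + sqn (M 1 0) + sqn (M 1 1).

Lemma sqnM (x y : R[i]) : sqn (x * y) = sqn x * sqn y.
Proof. case: x => a b; case: y => c d; rewrite /sqn /=. ring. Qed.
Lemma cs (a b x y : R[i]) : sqn (a * x + b * y) + sqn (a * conjc y - b * conjc x) = (sqn a + sqn b) * (sqn x + sqn y).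
Proof. case: a => ? ?; case: b => ? ?; case: x => ? ?; case: y => ? ?; rewrite /sqn /=. ring. Qed.
Lemma sqn_ge0 z : 0 <= sqn z.
Proof. by rewrite /sqn addr_ge0 // sqr_ge0. Qed.
Lemma sqn_gt0 z : z != 0 -> 0 < sqn z.
Proof.
case: z => a b nz; rewrite /sqn /=.
have : (a != 0) || (b != 0).
  by rewrite -negb_and; apply: contra nz => /andP[/eqP -> /eqP ->].
case/orP => h.
  by rewrite ltr_pwDl ?sqr_ge0 // exprn_even_gt0.
by rewrite ltr_pwDr ?sqr_ge0 // exprn_even_gt0.
Qed.
Lemma sqnR (r : R) : sqn (Complex r 0) = r ^+ 2.
Proof. by rewrite /sqn /= expr0n addr0. Qed.
Lemma sqn1 : sqn 1 = 1.
Proof. by rewrite /sqn /= expr1n expr0n addr0. Qed.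
Lemma sqn0 : sqn 0 = 0.
Proof. by rewrite /sqn /= expr0n addr0. Qed.

Lemma sum2 (V : nmodType) (F : 'I_2 -> V) : \sum_(k<2) F k = F 0 + F 1.
Proof. by rewrite big_ord_recl big_ord1; congr (F _ + F _); exact: val_inj. Qed.
Lemma vnormE v : vnorm v = Num.sqrt (vn2 v). Proof. by []. Qed.
Lemma vn2E v : vn2 v = sqn (v 0 0) + sqn (v 1 0).
Proof. by rewrite /vn2 sum2. Qed.
Lemma mulmx2 (M : 'M[R[i]]_2) (v : 'cV[R[i]]_2) k : (M *m v) k 0 = M k 0 * v 0 0 + M k 1 * v 1 0.
Proof. by rewrite mxE sum2. Qed.

Lemma vn2_Mv M v : vn2 (M *m v) <= frob2 M * vn2 v.
Proof.
rewrite !vn2E !mulmx2 /frob2.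
have h1 := cs (M 0 0) (M 0 1) (v 0 0) (v 1 0).
have h2 := cs (M 1 0) (M 1 1) (v 0 0) (v 1 0).
have g1 := sqn_ge0 (M 0 0 * conjc (v 1 0) - M 0 1 * conjc (v 0 0)).
have g2 := sqn_ge0 (M 1 0 * conjc (v 1 0) - M 1 1 * conjc (v 0 0)).
lra.
Qed.

Lemma ord2P (i : 'I_2) : i = 0 \/ i = 1.
Proof. case: i => [[|[|k]] h]; [left|right|by []]; exact: val_inj. Qed.

Lemma det2 (A : 'M[R[i]]_2) : \det A = A 0 0 * A 1 1 - A 0 1 * A 1 0.
Proof.
rewrite (expand_det_row A 0) sum2 /cofactor !det_mx11 !mxE /=.
have -> : lift 0 (0 : 'I_1) = 1 :> 'I_2 by apply: val_inj.
have -> : lift 1 (0 : 'I_1) = 0 :> 'I_2 by apply: val_inj.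
rewrite expr0 expr1 mul1r mulN1r mulrN.
by [].
Qed.

Definition Sset (M : 'M[R[i]]_2) :=
  [set vnorm (M *m v) | v in [set v : 'cV[R[i]]_2 | vnorm v <= 1]].

Lemma frob2_ge0 M : 0 <= frob2 M.
Proof. by rewrite /frob2; do !apply: addr_ge0; exact: sqr_ge0. Qed.
Lemma vn2_ge0 v : 0 <= vn2 v.
Proof. by rewrite vn2E; do !apply: addr_ge0; exact: sqr_ge0. Qed.

Lemma vn2_le1 v : vnorm v <= 1 -> vn2 v <= 1.
Proof.
rewrite vnormE => h; have h0 := sqrtr_ge0 (vn2 v).
rewrite -(sqr_sqrtr (vn2_ge0 v)); nra.
Qed.

Lemma opnorm_ub M : ubound (Sset M) (Num.sqrt (frob2 M)).
Proof.
move=> y [v /= hv <-]; rewrite vnormE ler_sqrt ?frob2_ge0 //.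
have h1 := vn2_Mv M v; have h2 := @vn2_le1 v hv; have h3 := frob2_ge0 M.
have h4 := vn2_ge0 v.
nra.
Qed.

Lemma vn20 : vn2 0 = 0.
Proof. by rewrite vn2E !mxE sqn0 addr0. Qed.

Lemma opnorm_le M : opnorm M <= Num.sqrt (frob2 M).
Proof.
apply: ge_sup; last exact: opnorm_ub.
exists (vnorm (M *m 0)); exists 0 => //=.
by rewrite vnormE vn20 sqrtr0 ler01.
Qed.

Lemma vn2Z (a : R[i]) v : vn2 (a *: v) = sqn a * vn2 v.
Proof. rewrite !vn2E !mxE !sqnM; ring. Qed.

Lemma opnorm_ge M w K : 0 < vn2 w -> 0 <= K -> K ^+ 2 * vn2 w <= vn2 (M *m w) ->
  K <= opnorm M.
Proof.
move=> hw hK hMw.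
set x := vn2 w.
set r := (Num.sqrt x)^-1.
have hr2 : sqn (Complex r 0) = x^-1.
  by rewrite sqnR /r exprVn sqr_sqrtr // ltW.
have hx0 : x != 0 by rewrite gt_eqF.
set v := Complex r 0 *: w.
have hv : vn2 v = 1 by rewrite vn2Z hr2 mulVf.
have hMv : vn2 (M *m v) = x^-1 * vn2 (M *m w) by rewrite -scalemxAr vn2Z hr2.
have hK2 : K ^+ 2 <= vn2 (M *m v).
  have e : x * (x^-1 * vn2 (M *m w)) = vn2 (M *m w) by rewrite mulrA mulfV // mul1r.
  by rewrite hMv -(ler_pM2l hw) e mulrC.
apply: (@le_trans _ _ (vnorm (M *m v))).
  rewrite vnormE -(ger0_norm hK) -sqrtr_sqr ler_sqrt //.
  exact: vn2_ge0.
apply: ub_le_sup; first by exists (Num.sqrt (frob2 M)); exact: opnorm_ub.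
exists v => //=.
by rewrite vnormE hv sqrtr1.
Qed.

Lemma pos_core B X w K : opnorm B <= K -> 0 < vn2 w -> 0 <= K ->
  (forall l, K ^+ 2 * vn2 w <= vn2 ((B + l *: X) *m w)) -> bj_orth B X.
Proof. move=> hB hw hK h l; apply: le_trans hB _; exact: (@opnorm_ge _ w K hw hK (h l)). Qed.

Lemma sqnN z : sqn (- z) = sqn z.
Proof. by case: z => a b; rewrite /sqn /= !sqrrN. Qed.

Lemma sqn_div x a : a != 0 -> sqn (x / a) * sqn a = sqn x.
Proof. by move=> ha; rewrite -sqnM divfK. Qed.

Lemma sqn_sub (s : R) c : sqn (c - Complex s 0 * c) = (1 - s) ^+ 2 * sqn c.
Proof. case: c => a b; rewrite /sqn /=; ring. Qed.

Lemma neg_core B X (c a : R[i]) : c != 0 -> a != 0 ->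
  Num.sqrt (sqn c) <= opnorm B -> sqn a <= frob2 X ->
  (forall l, frob2 (B + l *: X) = sqn (c + l * a) + sqn l * (frob2 X - sqn a)) ->
  ~ bj_orth B X.
Proof.
move=> hc ha hB haX hF hbj.
set q := sqn a; set p := sqn c; set S := frob2 X - q.
have hq : 0 < q by exact: sqn_gt0.
have hp : 0 < p by exact: sqn_gt0.
have hS : 0 <= S by rewrite subr_ge0.
have hqS : 0 < q + S by rewrite ltr_pwDl.
set s := q / (q + S).
have hs : s * (q + S) = q by rewrite /s divfK // gt_eqF.
have hs0 : 0 < s by rewrite /s divr_gt0.
set l := - (Complex s 0 * c / a).
have hla : c + l * a = c - Complex s 0 * c by rewrite /l mulNr divfK.
have hl : sqn l * q = s ^+ 2 * p.
  by rewrite /l sqnN sqn_div // sqnM sqnR.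
have key : frob2 (B + l *: X) < p.
  rewrite hF hla sqn_sub -/p -/S.
  rewrite -(ltr_pM2r hq).
  have hL2 : sqn l * S * q = s ^+ 2 * p * S by rewrite mulrAC hl.
  have e : (1 - s) ^+ 2 * p * q + s ^+ 2 * p * S - p * q * (1 - s) = p * s * (s * (q + S) - q) by ring.
  rewrite hs subrr mulr0 in e.
  have hpqs := mulr_gt0 (mulr_gt0 hp hq) hs0.
  rewrite mulrDl hL2.
  nra.
have := hbj l.
have := opnorm_le (B + l *: X).
have : Num.sqrt (frob2 (B + l *: X)) < Num.sqrt p by rewrite ltr_sqrt.
move=> h1 h2 h3.
have := le_trans hB (le_trans h3 h2).
by rewrite leNgt h1.
Qed.


Lemma negBJ (i j : 'I_2) (c : R[i]) X : c != 0 -> bj_orth (c *: E R i j) X -> X i j = 0.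
Proof.
move=> hc hbj; apply/eqP; apply/negPn/negP => ha.
apply: (@neg_core _ X c (X i j) hc ha _ _ _ hbj).
- apply: (opnorm_ge _ (delta_mx j 0)); last first.
  + rewrite sqr_sqrtr ?sqn_ge0 //.
    by case: (ord2P i) => ->; case: (ord2P j) => ->;
      rewrite !vn2E !mulmx2 /E !mxE /= ?mulr0 ?mulr1 ?addr0 ?add0r ?sqn0 ?sqn1 ?addr0 ?add0r ?mulr1.
  + exact: sqrtr_ge0.
  + by case: (ord2P j) => ->; rewrite vn2E !mxE /= sqn0 sqn1 ?addr0 ?add0r ltr01.
- have := sqn_ge0 (X 0 0); have := sqn_ge0 (X 0 1); have := sqn_ge0 (X 1 0);
  have := sqn_ge0 (X 1 1).
  by rewrite /frob2; case: (ord2P i) => ->; case: (ord2P j) => ->; lra.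
- move=> l.
  by case: (ord2P i) => ->; case: (ord2P j) => ->;
    rewrite /frob2 /E !mxE /= ?mulr0 ?mulr1 ?add0r ?addr0 !sqnM ?sqn0; ring.
Qed.

Lemma posE (X : 'M[R[i]]_2) : X 0 0 = 0 -> bj_orth (E R 0 0) X.
Proof.
move=> h0; apply: (@pos_core _ X (delta_mx 0 0) 1).
- have := opnorm_le (E R 0 0).
  by rewrite /frob2 /E !mxE /= sqn1 sqn0 !addr0 sqrtr1.
- by rewrite vn2E !mxE /= sqn1 sqn0 addr0 ltr01.
- exact: ler01.
- move=> l; rewrite !vn2E !mulmx2 /E !mxE /= h0.
  rewrite ?mulr0 ?mulr1 ?addr0 ?add0r.
  have := sqn_ge0 (l * X 1 0); rewrite sqn1 sqn0; lra.
Qed.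

Lemma idA (b d l : R[i]) : sqn (b + l * conjc d) + sqn (d + l * - conjc b) =
  (sqn b + sqn d) + sqn l * (sqn b + sqn d).
Proof. case: b => ? ?; case: d => ? ?; case: l => ? ?; rewrite /sqn /=; ring. Qed.

Lemma caseA (b d : R[i]) (B : 'M_2) : B 0 0 = 0 -> B 1 0 = 0 -> B 0 1 = b -> B 1 1 = d -> d != 0 ->
  exists X, [/\ bj_orth (E R 0 0) X, bj_orth B X & \det X != 0].
Proof.
move=> h00 h10 h01 h11 hd.
exists (\matrix_(k < 2, m < 2) (if k == 0 then (if m == 0 then 0 else conjc d) else (if m == 0 then 1 else - conjc b))).
split.
- by apply: posE; rewrite mxE.
- apply: (@pos_core _ _ (delta_mx 1 0) (Num.sqrt (sqn b + sqn d))).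
  + have := opnorm_le B.
    by rewrite /frob2 h00 h10 h01 h11 sqn0 add0r addr0.
  + by rewrite vn2E !mxE /= sqn1 sqn0 add0r ltr01.
  + exact: sqrtr_ge0.
  + move=> l; rewrite sqr_sqrtr; last exact: (addr_ge0 (sqn_ge0 _) (sqn_ge0 _)).
    rewrite !vn2E !mulmx2 !mxE /= h00 h10 h01 h11.
    rewrite ?mulr0 ?mulr1 ?addr0 ?add0r ?sqn1 ?sqn0 add0r mulr1 idA.
    have := mulr_ge0 (sqn_ge0 l) (addr_ge0 (sqn_ge0 b) (sqn_ge0 d)); lra.
- by rewrite det2 !mxE /= mul0r mulr1 sub0r oppr_eq0 conjc_eq0.
Qed.

Lemma sqnJ z : sqn (conjc z) = sqn z.
Proof. by case: z => a b; rewrite /sqn /= sqrrN. Qed.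

Lemma idB (c d l : R[i]) : sqn (0 * conjc c + l * conjc d) +
  sqn ((c + l * conjc d) * conjc c + (d + l * - conjc c) * conjc d) =
  sqn l * sqn d + (sqn c + sqn d) * (sqn c + sqn d).
Proof. case: c => ? ?; case: d => ? ?; case: l => ? ?; rewrite /sqn /=; ring. Qed.

Lemma caseB (c d : R[i]) (B : 'M_2) : B 0 0 = 0 -> B 0 1 = 0 -> B 1 0 = c -> B 1 1 = d -> d != 0 ->
  exists X, [/\ bj_orth (E R 0 0) X, bj_orth B X & \det X != 0].
Proof.
move=> h00 h01 h10 h11 hd.
exists (\matrix_(k < 2, m < 2) (if k == 0 then (if m == 0 then 0 else 1) else (if m == 0 then conjc d else - conjc c))).
have hN : 0 <= sqn c + sqn d by exact: (addr_ge0 (sqn_ge0 _) (sqn_ge0 _)).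
split.
- by apply: posE; rewrite mxE.
- apply: (@pos_core _ _ (\matrix_(k < 2, m < 1) (if k == 0 then conjc c else conjc d)) (Num.sqrt (sqn c + sqn d))).
  + have := opnorm_le B.
    by rewrite /frob2 h00 h10 h01 h11 sqn0 !add0r.
  + rewrite vn2E !mxE /= !sqnJ.
    have := @sqn_gt0 d hd; have := sqn_ge0 c; lra.
  + exact: sqrtr_ge0.
  + move=> l; rewrite sqr_sqrtr //.
    rewrite !vn2E !mulmx2 !mxE /= h00 h10 h01 h11 !sqnJ.
    rewrite ?mulr0 ?mulr1 ?addr0 ?add0r ?sqn1 ?sqn0.
    rewrite idB.
    have := mulr_ge0 (sqn_ge0 l) (sqn_ge0 d); lra.
- by rewrite det2 !mxE /= mul0r mul1r sub0r oppr_eq0 conjc_eq0.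
Qed.

Lemma rank_le1 (X : 'M[R[i]]_2) : \det X = 0 -> (\rank X <= 1)%N.
Proof.
move=> h; have : ~~ row_free X by rewrite row_free_unit unitmxE h unitr0.
by move: (rank_leq_row X); rewrite /row_free; case: (\rank X) => [|[|[|n]]].
Qed.

Lemma rank2 (X : 'M[R[i]]_2) : \det X != 0 -> \rank X = 2%N.
Proof. by move=> h; apply: mxrank_unit; rewrite unitmxE unitfE. Qed.

End S.
Arguments rank2 {R X}. Arguments rank_le1 {R X}. Arguments det2 {R}.
Arguments negBJ {R i j c X}. Arguments posE {R}. Arguments caseA {R b d B}. Arguments caseB {R c d B}.

Theorem lemma5p1 (R : realType) (B : 'M[R[i]]_2) :
  \rank B = 1%N ->
  ((bj_orth (E R 0 0) B /\
    forall X : 'M[R[i]]_2, bj_orth (E R 0 0) X -> bj_orth B X -> (\rank X <= 1)%N)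
   <->
   (B != 0 /\ exists c : R[i], B = c *: E R 0 1 \/ B = c *: E R 1 0)).
Proof.
move=> hr.
have hB0 : B != 0 by apply/eqP => h; move: hr; rewrite h mxrank0.
have hdet : \det B = 0.
  by apply/eqP; apply/negPn/negP => h; move: hr; rewrite (rank2 h).
split.
- case=> hE hX.
  have h00 : B 0 0 = 0.
    by apply: (@negBJ R 0 0 1 B (oner_neq0 _)); rewrite scale1r.
  have hprod : B 0 1 * B 1 0 = 0.
    by move: hdet; rewrite det2 h00 mul0r sub0r => /eqP; rewrite oppr_eq0 => /eqP.
  split=> //.
  have/orP[/eqP h01|/eqP h10] : (B 0 1 == 0) || (B 1 0 == 0) by rewrite -mulf_eq0 hprod.
  + have [h11|h11] := eqVneq (B 1 1) 0.
      exists (B 1 0); right; apply/matrixP => i j; rewrite /E !mxE.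
      by case: (ord2P i) => ->; case: (ord2P j) => -> /=; rewrite ?mulr0 ?mulr1.
    have [X [hEX hBX hdX]] := caseB h00 h01 erefl erefl h11.
    by have := hX X hEX hBX; rewrite rank2.
  + have [h11|h11] := eqVneq (B 1 1) 0.
      exists (B 0 1); left; apply/matrixP => i j; rewrite /E !mxE.
      by case: (ord2P i) => ->; case: (ord2P j) => -> /=; rewrite ?mulr0 ?mulr1.
    have [X [hEX hBX hdX]] := caseA h00 h10 erefl erefl h11.
    by have := hX X hEX hBX; rewrite rank2.
- case=> hBn [c hc].
  have hc0 : c != 0.
    by apply: contraNneq hBn => c0; case: hc => ->; rewrite c0 scale0r.
  case: hc => ->; split.
  + by apply: posE; rewrite /E !mxE /= mulr0.
  + move=> X hEX hBX.
    have x00 : X 0 0 = 0 by apply: (@negBJ R 0 0 1 X (oner_neq0 _)); rewrite scale1r.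
    have x01 := negBJ hc0 hBX.
    by apply: rank_le1; rewrite det2 x00 x01 !mul0r subr0.
  + by apply: posE; rewrite /E !mxE /= mulr0.
  + move=> X hEX hBX.
    have x00 : X 0 0 = 0 by apply: (@negBJ R 0 0 1 X (oner_neq0 _)); rewrite scale1r.
    have x10 := negBJ hc0 hBX.
    by apply: rank_le1; rewrite det2 x00 x10 mul0r mulr0 subr0.
Qed.
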